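(* Let $u=v$ be a context equation and let $u'=v'$ be obtained from it by one of the following operations: (1) replacing all occurrences of a context variable $X$ by $tX$ (respectively all occurrences of a variable $x$ by $tx$), where $t$ is a context term; (2) replacing all occurrences of a context variable $X$ by $Xt$, where $t$ is a context term; (3) replacing all occurrences of a variable $x$ by a ground term $t$; (4) performing an $(f,i,a)$ leaf compression on $u=v$; (5) performing an $a,b$ pair compression on $u=v$; (6) performing an $a$-maximal chain compression on $u=v$. If $u'=v'$ has a solution then $u=v$ has a solution.
   Context: $\Sigma$ is a ranked signature; $\Omega$ is a special constant not in $\Sigma$; context variables have arity $1$, variables arity $0$. Ground terms: finite ordered trees over $\Sigma$ with each node labelled $f$ having $\mathrm{ar}(f)$ children; ground contexts: ground terms over $\Sigma\cup\{\Omega\}$ with exactly one $\Omega$; terms: such trees over $\Sigma$, variables and context variables; context terms: trees over $\Sigma$, variables, context variables and $\Omega$ with exactly one $\Omega$. For a term or context term $s$ with one $\Omega$, ''replacing $X$ by $tX$'' means replacing each subterm $X(s)$ by $t$ with $\Omega$ replaced by $X(s)$, and ''replacing $X$ by $Xt$'' means replacing each $X(s)$ by $X(t')$ where $t'$ is $t$ with $\Omega$ replaced by $s$. A context equation is $u=v$ with $u,v$ terms. A substitution $\sigma$ assigns ground contexts to context variables and ground terms to variables, extended by $\sigma(a)=a$, $\sigma(f(t_1,\dots,t_m))=f(\sigma(t_1),\dots,\sigma(t_m))$, $\sigma(Xt)=\sigma(X)\sigma(t)$; a solution satisfies $\sigma(u)=\sigma(v)$. The compressions are performed on the equation viewed as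 a tree whose root is labelled $=$ with children $u$ and $v$ (variables and context variables are never compressed), with fresh letters not occurring in the equation: $(f,i,a)$ leaf compression ($\mathrm{ar}(f)=m\ge i\ge1$, $a$ a constant) replaces each subtree $f(t_1,\dots,t_{i-1},a,t_{i+1},\dots,t_m)$ by $f'(t_1,\dots,t_{i-1},t_{i+1},\dots,t_m)$ with $f'$ a fresh letter of arity $m-1$; $a,b$ pair compression ($a,b$ unary) replaces each node labelled $a$ whose child is labelled $b$, together with that child, by one node labelled by a fresh unary letter $c$; $a$-maximal chain compression ($a$ unary) replaces each maximal (upward and downward) chain of $\ell$ consecutive nodes labelled $a$ by one node labelled with a fresh unary letter $a_\ell$ (distinct for distinct $\ell$). *)

(* Defs.v *)
From mathcomp Require Import all_boot.
Set Implicit Arguments. Unset Strict Implicit. Unset Printing Implicit Defensive.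

(* Trees over letters F (ranked by ar), variables V, context variables CV,
   and the special constant Omega (Hole). *)
Inductive tm (F V CV : Type) : Type :=
| App : F -> seq (tm F V CV) -> tm F V CV
| Var : V -> tm F V CV
| CApp : CV -> tm F V CV -> tm F V CV
| Hole : tm F V CV.

Arguments Hole {F V CV}.
Arguments App {F V CV}.
Arguments Var {F V CV}.
Arguments CApp {F V CV}.

Section Ctx.
Variables (F V CV : eqType) (ar : F -> nat).
Notation term := (tm F V CV).

Fixpoint wf (Sig : pred F) (t : term) : bool :=
  match t with
  | App f ts => [&& Sig f, size ts == ar f & all (wf Sig) ts]
  | Var _ => true
  | CApp _ s => wf Sig s
  | Hole => true
  end.

Fixpoint holes (t : term) : nat :=
  match t with
  | App _ ts => sumn (map holes ts)
  | Var _ => 0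
  | CApp _ s => holes s
  | Hole => 1
  end.

Fixpoint novars (t : term) : bool :=
  match t with
  | App _ ts => all novars ts
  | Var _ => false
  | CApp _ _ => false
  | Hole => true
  end.

Fixpoint occurs (g : F) (t : term) : bool :=
  match t with
  | App h ts => (h == g) || has (occurs g) ts
  | Var _ => false
  | CApp _ s => occurs g s
  | Hole => false
  end.

Definition is_term Sig t := wf Sig t && (holes t == 0).
Definition is_ctxterm Sig t := wf Sig t && (holes t == 1).
Definition is_ground Sig t := is_term Sig t && novars t.
Definition is_gctx Sig t := is_ctxterm Sig t && novars t.

Fixpoint plug (c s : term) : term :=
  match c with
  | App f ts => App f (map (fun c' => plug c' s) ts)
  | Var x => Var x
  | CApp X c' => CApp X (plug c' s)
  | Hole => s
  end.

Fixpoint subst (sv : V -> term) (sc : CV -> term) (t : term) : term :=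
  match t with
  | App f ts => App f (map (subst sv sc) ts)
  | Var x => sv x
  | CApp X s => plug (sc X) (subst sv sc s)
  | Hole => Hole
  end.

Definition solvable (Sig : pred F) (u v : term) : Prop :=
  exists (sv : V -> term) (sc : CV -> term),
    [/\ forall x, is_ground Sig (sv x),
        forall X, is_gctx Sig (sc X) &
        subst sv sc u = subst sv sc v].

Fixpoint repl_CX_left (X : CV) (t s : term) : term :=
  match s with
  | App f ss => App f (map (repl_CX_left X t) ss)
  | Var y => Var y
  | CApp Y s' => if Y == X then plug t (CApp X (repl_CX_left X t s'))
                 else CApp Y (repl_CX_left X t s')
  | Hole => Hole
  end.

Fixpoint repl_x_left (x : V) (t s : term) : term :=
  match s with
  | App f ss => App f (map (repl_x_left x t) ss)
  | Var y => if y == x then plug t (Var x) else Var y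
  | CApp Y s' => CApp Y (repl_x_left x t s')
  | Hole => Hole
  end.

Fixpoint repl_CX_right (X : CV) (t s : term) : term :=
  match s with
  | App f ss => App f (map (repl_CX_right X t) ss)
  | Var y => Var y
  | CApp Y s' => if Y == X then CApp X (plug t (repl_CX_right X t s'))
                 else CApp Y (repl_CX_right X t s')
  | Hole => Hole
  end.

Fixpoint repl_x (x : V) (t s : term) : term :=
  match s with
  | App f ss => App f (map (repl_x x t) ss)
  | Var y => if y == x then t else Var y
  | CApp Y s' => CApp Y (repl_x x t s')
  | Hole => Hole
  end.

Definition is_leaf (a : F) (t : term) : bool :=
  if t is App b [::] then b == a else false.

(* (4) (f,i,a) leaf compression with fresh f' (i is 1-based) *)
Fixpoint leaf_comp (f : F) (i : nat) (a f' : F) (t : term) : term :=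
  match t with
  | App g ts =>
      if (g == f) && is_leaf a (nth Hole ts i.-1)
      then let ts' := map (leaf_comp f i a f') ts in
           App f' (take i.-1 ts' ++ drop i ts')
      else App g (map (leaf_comp f i a f') ts)
  | Var y => Var y
  | CApp Y s => CApp Y (leaf_comp f i a f' s)
  | Hole => Hole
  end.

Fixpoint pair_comp (a b c : F) (t : term) : term :=
  match t with
  | App g ts =>
      match ts with
      | [:: App h [:: s]] =>
          if (g == a) && (h == b) then App c [:: pair_comp a b c s]
          else App g (map (pair_comp a b c) ts)
      | _ => App g (map (pair_comp a b c) ts)
      end
  | Var y => Var y
  | CApp Y s => CApp Y (pair_comp a b c s)
  | Hole => Hole
  end.

(* (6) a-maximal chain compression; al l is the fresh letter a_l.
   chain_comp k t : t sits directly below a (maximal upward) chain of k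
   nodes labelled a which is still to be emitted. *)
Definition wrap (al : nat -> F) (k : nat) (t : term) : term :=
  if k == 0 then t else App (al k) [:: t].

Fixpoint chain_comp (a : F) (al : nat -> F) (k : nat) (t : term) : term :=
  match t with
  | App g ts =>
      match ts with
      | [:: s] => if g == a then chain_comp a al k.+1 s
                  else wrap al k (App g [:: chain_comp a al 0 s])
      | _ => wrap al k (App g (map (chain_comp a al 0) ts))
      end
  | Var y => wrap al k (Var y)
  | CApp Y s => wrap al k (CApp Y (chain_comp a al 0 s))
  | Hole => wrap al k Hole
  end.

Definition fresh_in (g : F) (u v : term) := ~~ occurs g u && ~~ occurs g v.

Inductive step (Sig : pred F) (u v : term) : pred F -> term -> term -> Prop :=
| StepCXleft X t : is_ctxterm Sig t ->
    step Sig u v Sig (repl_CX_left X t u) (repl_CX_left X t v)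
| StepXleft x t : is_ctxterm Sig t ->
    step Sig u v Sig (repl_x_left x t u) (repl_x_left x t v)
| StepCXright X t : is_ctxterm Sig t ->
    step Sig u v Sig (repl_CX_right X t u) (repl_CX_right X t v)
| StepX x t : is_ground Sig t ->
    step Sig u v Sig (repl_x x t u) (repl_x x t v)
| StepLeaf f i a f' : Sig f -> Sig a -> 1 <= i <= ar f -> ar a = 0 ->
    ar f' = (ar f).-1 -> fresh_in f' u v ->
    step Sig u v [pred g | Sig g || (g == f')]
         (leaf_comp f i a f' u) (leaf_comp f i a f' v)
| StepPair a b c : Sig a -> Sig b -> a != b -> ar a = 1 -> ar b = 1 ->
    ar c = 1 -> fresh_in c u v ->
    step Sig u v [pred g | Sig g || (g == c)]
         (pair_comp a b c u) (pair_comp a b c v)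
| StepChain a (al : nat -> F) (Sig' : pred F) : Sig a -> ar a = 1 ->
    (forall l, 0 < l -> ar (al l) = 1) ->
    (forall l1 l2, 0 < l1 -> 0 < l2 -> al l1 = al l2 -> l1 = l2) ->
    (forall l, 0 < l -> fresh_in (al l) u v) ->
    (forall g, Sig' g <-> Sig g \/ exists2 l, 0 < l & g = al l) ->
    step Sig u v Sig'
         (chain_comp a al 0 u) (chain_comp a al 0 v).

End Ctx.

(* Main.v *)
Require Import Defs.
From mathcomp Require Import all_boot.
From Stdlib Require Import ClassicalEpsilon.
Set Implicit Arguments. Unset Strict Implicit. Unset Printing Implicit Defensive.

Section Gen.
Variables (F V CV : eqType) (ar : F -> nat).
Notation term := (tm F V CV).

Fixpoint allT (P : term -> Prop) (ts : seq term) : Prop :=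
  if ts is t :: ts' then P t /\ allT P ts' else True.

Section Ind.
Variable P : term -> Prop.
Hypotheses (HA : forall f ts, allT P ts -> P (App f ts))
  (HV : forall x, P (Var x)) (HC : forall X s, P s -> P (CApp X s)) (HH : P Hole).
Fixpoint tm_ind' (t : term) : P t :=
  match t with
  | App f ts => HA f ((fix go (ts : seq term) : allT P ts :=
                       match ts with [::] => I | t :: ts' => conj (tm_ind' t) (go ts') end) ts)
  | Var x => HV x
  | CApp X s => HC X (tm_ind' s)
  | Hole => HH
  end.
End Ind.

Lemma map_allT A (f g : term -> A) ts : allT (fun t => f t = g t) ts -> map f ts = map g ts.
Proof. by elim: ts => //= t ts IH [-> /IH ->]. Qed.

Lemma allT_imp (P Q : term -> Prop) ts : allT P ts -> (forall t, P t -> Q t) -> allT Q ts.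
Proof. by elim: ts => //= t ts IH [Ht Hts] H; split; [apply: H|apply: IH]. Qed.

Lemma allT_all (q : pred term) (R : term -> Prop) ts :
  allT (fun t => q t -> R t) ts -> all q ts -> allT R ts.
Proof. by elim: ts => //= t ts IH [Ht Hts] /andP [Hq Hqs]; split; [apply: Ht|apply: IH]. Qed.

Lemma allT_gen (I : Type) (C : I -> Prop) (Q : I -> pred term) (R : term -> Prop) ts :
  allT (fun t => (forall l, C l -> Q l t) -> R t) ts ->
  (forall l, C l -> all (Q l) ts) -> allT R ts.
Proof.
elim: ts => //= t ts IH [Ht Hts] H; split.
  by apply: Ht => l /H /andP [].
by apply: IH => // l /H /andP [].
Qed.

Lemma allT_all2 (q r : pred term) ts :
  allT (fun t => q t -> r t) ts -> all q ts -> all r ts.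
Proof. by elim: ts => //= t ts IH [Ht Hts] /andP [Hq Hqs]; rewrite Ht // IH. Qed.

Lemma all_allT (q : pred term) ts : all q ts -> allT (fun t => q t) ts.
Proof. by elim: ts => //= t ts IH /andP [-> /IH]. Qed.

Lemma allT_all' (q : pred term) ts : allT (fun t => q t) ts -> all q ts.
Proof. by elim: ts => //= t ts IH [-> /IH]. Qed.

Lemma plug_assoc (a b c : term) : plug (plug a b) c = plug a (plug b c).
Proof.
elim/tm_ind': a => [f ts IH|x|X s IH|] //=; last by rewrite IH.
by congr App; rewrite -map_comp; apply: map_allT; exact: IH.
Qed.

Lemma holes0_sumn ts : sumn (map (@holes _ _ _) ts) = 0 -> allT (fun t : term => holes t = 0) ts.
Proof.
elim: ts => //= t ts IH /eqP; rewrite addn_eq0 => /andP [/eqP -> /eqP /IH]; done.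
Qed.

Lemma plug_nohole (c s : term) : holes c = 0 -> plug c s = c.
Proof.
elim/tm_ind': c => [f ts IH|x|X c IH|] //=; last by move=> /IH ->.
move=> /holes0_sumn H; congr App.
rewrite -[RHS]map_id; apply: map_allT.
by elim: ts IH H => //= t ts IHts [Ht Hts] [H0 H0s]; split; [apply: Ht|apply: IHts].
Qed.

Lemma subst_plug sv sc (c s : term) : (forall x, holes (sv x) = 0) ->
  subst sv sc (plug c s) = plug (subst sv sc c) (subst sv sc s).
Proof.
move=> Hsv; elim/tm_ind': c => [f ts IH|x|X c IH|] //=.
- by congr App; rewrite -!map_comp; apply: map_allT; exact: IH.
- by rewrite plug_nohole.
- by rewrite IH plug_assoc.
Qed.

Lemma subst_novars sv sc (t : term) : novars t -> subst sv sc t = t.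
Proof.
elim/tm_ind': t => [f ts IH|x|X c IH|] //= H.
congr App; rewrite -[RHS]map_id; apply: map_allT.
exact: (allT_all IH H).
Qed.

Lemma sumn_mul ts k : sumn (map (fun t : term => holes t * k) ts) = sumn (map (@holes _ _ _) ts) * k.
Proof. by elim: ts => //= t ts ->; rewrite mulnDl. Qed.

Lemma holes_plug (c s : term) : holes (plug c s) = holes c * holes s.
Proof.
elim/tm_ind': c => [f ts IH|x|X c IH|] //=; last by rewrite mul1n.
rewrite -sumn_mul -map_comp; congr sumn; apply: map_allT; exact: IH.
Qed.

Lemma novars_plug (c s : term) : novars c -> novars s -> novars (plug c s).
Proof.
move=> + Hs; elim/tm_ind': c => [f ts IH|x|X c IH|] //= H.
rewrite all_map; exact: (allT_all2 IH H).
Qed.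

Lemma wf_plug Sig (c s : term) : wf ar Sig c -> wf ar Sig s -> wf ar Sig (plug c s).
Proof.
move=> + Hs; elim/tm_ind': c => [f ts IH|x|X c IH|] //=.
case/and3P => -> /eqP Hsz H /=; rewrite size_map Hsz eqxx /= all_map.
exact: (allT_all2 IH H).
Qed.

Lemma holes_subst sv sc (t : term) : (forall x, holes (sv x) = 0) ->
  (forall X, holes (sc X) = 1) -> holes (subst sv sc t) = holes t.
Proof.
move=> Hsv Hsc; elim/tm_ind': t => [f ts IH|x|X c IH|] //=.
- by rewrite -map_comp; congr sumn; apply: map_allT.
- by rewrite holes_plug Hsc mul1n IH.
Qed.

Lemma novars_subst sv sc (t : term) : (forall x, novars (sv x)) ->
  (forall X, novars (sc X)) -> novars (subst sv sc t).
Proof.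
move=> Hsv Hsc; elim/tm_ind': t => [f ts IH|x|X c IH|] //=.
- rewrite all_map; apply: allT_all'; exact: IH.
- exact: novars_plug.
Qed.

Lemma wf_subst Sig sv sc (t : term) : (forall x, wf ar Sig (sv x)) ->
  (forall X, wf ar Sig (sc X)) -> wf ar Sig t -> wf ar Sig (subst sv sc t).
Proof.
move=> Hsv Hsc; elim/tm_ind': t => [f ts IH|x|X c IH|] //=.
- case/and3P => -> /eqP Hsz H /=; rewrite size_map Hsz eqxx /= all_map.
  exact: (allT_all2 IH H).
- by move=> H; apply: wf_plug => //; apply: IH.
Qed.

Lemma gctx_subst Sig sv sc (t : term) : (forall x, is_ground ar Sig (sv x)) ->
  (forall X, is_gctx ar Sig (sc X)) -> is_ctxterm ar Sig t -> is_gctx ar Sig (subst sv sc t).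
Proof.
move=> Hsv Hsc /andP [Hw /eqP Hh].
have H1 : forall x, holes (sv x) = 0 by move=> x; case/andP: (Hsv x) => /andP [_ /eqP].
have H2 : forall X, holes (sc X) = 1 by move=> X; case/andP: (Hsc X) => /andP [_ /eqP].
rewrite /is_gctx /is_ctxterm holes_subst // Hh eqxx andbT.
apply/andP; split.
  by apply: wf_subst => // [x|X]; [case/andP: (Hsv x) => /andP []|case/andP: (Hsc X) => /andP []].
by apply: novars_subst => // [x|X]; [case/andP: (Hsv x)|case/andP: (Hsc X)].
Qed.

Section Dec.
Variable h : F -> seq term -> term.
Fixpoint D (t : term) : term :=
  match t with
  | App g ts => h g (map D ts)
  | Var y => Var y
  | CApp Y s => CApp Y (D s)
  | Hole => Hole
  end.

Hypothesis hplug : forall g ts s, plug (h g ts) s = h g (map (fun c => plug c s) ts).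
Hypothesis hsubst : forall sv sc g ts, subst sv sc (h g ts) = h g (map (subst sv sc) ts).

Lemma D_plug c s : D (plug c s) = plug (D c) (D s).
Proof.
elim/tm_ind': c => [f ts IH|x|X c IH|] //=; last by rewrite IH.
rewrite hplug -!map_comp; congr h; apply: map_allT; exact: IH.
Qed.

Lemma D_subst sv sc t : D (subst sv sc t) = subst (fun x => D (sv x)) (fun X => D (sc X)) (D t).
Proof.
elim/tm_ind': t => [f ts IH|x|X c IH|] //=; last by rewrite D_plug IH.
rewrite hsubst -!map_comp; congr h; apply: map_allT; exact: IH.
Qed.

Variables (Sig Sig' : pred F).
Hypothesis hholes : forall g ts, holes (h g ts) = sumn (map (@holes _ _ _) ts).
Hypothesis hnovars : forall g ts, novars (h g ts) = all (@novars _ _ _) ts.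
Hypothesis hwf : forall g ts, Sig' g -> size ts = ar g -> all (wf ar Sig) ts -> wf ar Sig (h g ts).

Lemma D_holes t : holes (D t) = holes t.
Proof.
elim/tm_ind': t => [f ts IH|x|X c IH|] //=.
rewrite hholes -map_comp; congr sumn; apply: map_allT; exact: IH.
Qed.

Lemma D_novars t : novars (D t) = novars t.
Proof.
elim/tm_ind': t => [f ts IH|x|X c IH|] //=.
rewrite hnovars; elim: ts IH => //= t ts IHts [-> /IHts ->] //.
Qed.

Lemma D_wf t : wf ar Sig' t -> wf ar Sig (D t).
Proof.
elim/tm_ind': t => [f ts IH|x|X c IH|] //=.
case/and3P => Hf /eqP Hsz H; apply: hwf => //; first by rewrite size_map.
rewrite all_map; exact: (allT_all2 IH H).
Qed.

Lemma D_ground t : is_ground ar Sig' t -> is_ground ar Sig (D t).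
Proof.
by case/andP => /andP [Hw Hh] Hn; rewrite /is_ground /is_term D_wf // D_holes Hh D_novars.
Qed.

Lemma D_gctx t : is_gctx ar Sig' t -> is_gctx ar Sig (D t).
Proof.
by case/andP => /andP [Hw Hh] Hn; rewrite /is_gctx /is_ctxterm D_wf // D_holes Hh D_novars.
Qed.

Lemma D_solvable (C : term -> term) u v :
  D (C u) = u -> D (C v) = v -> solvable ar Sig' (C u) (C v) -> solvable ar Sig u v.
Proof.
move=> Hu Hv [sv [sc [Hsv Hsc Heq]]].
exists (fun x => D (sv x)), (fun X => D (sc X)); split.
- by move=> x; apply: D_ground.
- by move=> X; apply: D_gctx.
- by rewrite -{1}Hu -{1}Hv -!D_subst Heq.
Qed.
End Dec.

Section Leaf.
Variables (f : F) (i : nat) (a f' : F).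
Definition hleaf (g : F) (ts : seq term) : term :=
  if g == f' then App f (take i.-1 ts ++ App a [::] :: drop i.-1 ts) else App g ts.

Lemma sz_ins (ts : seq term) n x : size (take n ts ++ x :: drop n ts) = (size ts).+1.
Proof. by rewrite size_cat /= addnS -size_cat cat_take_drop. Qed.

Lemma D_leaf t : 0 < i -> ~~ occurs f' t -> D hleaf (leaf_comp f i a f' t) = t.
Proof.
move=> Hi; elim/tm_ind': t => [g ts IH|x|X c IH|] //=; last by move=> /IH ->.
rewrite negb_or => /andP [Hg Hts].
have Hm : map (D hleaf) (map (leaf_comp f i a f') ts) = ts.
  rewrite -map_comp -[RHS]map_id; apply: map_allT.
  by apply: (allT_all IH); rewrite all_predC.
case: ifP => [/andP [/eqP Hgf Hl]|_] /=; last by rewrite /hleaf (negbTE Hg) Hm.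
rewrite /hleaf eqxx map_cat map_take map_drop Hm.
case: i Hi Hl => // i' _ Hl /=.
have Hlt : i' < size ts.
  by rewrite ltnNge; apply/negP => /(nth_default Hole) Hd; rewrite Hd in Hl.
have Hn : nth Hole ts i' = App a [::] by case: (nth Hole ts i') Hl => // b [] // /eqP ->.
rewrite take_size_cat; last by rewrite size_takel // ltnW.
rewrite drop_size_cat; last by rewrite size_takel // ltnW.
by rewrite -Hn -drop_nth // cat_take_drop Hgf.
Qed.
Lemma hleaf_plug g ts s : plug (hleaf g ts) s = hleaf g (map (fun c => plug c s) ts).
Proof. by rewrite /hleaf; case: eqP => _ //=; rewrite map_cat /= map_take map_drop. Qed.

Lemma hleaf_subst sv sc g ts : subst sv sc (hleaf g ts) = hleaf g (map (subst sv sc) ts).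
Proof. by rewrite /hleaf; case: eqP => _ //=; rewrite map_cat /= map_take map_drop. Qed.

Lemma hleaf_holes g ts : holes (hleaf g ts) = sumn (map (@holes _ _ _) ts).
Proof.
rewrite /hleaf; case: eqP => _ //=.
by rewrite map_cat sumn_cat /= add0n -sumn_cat -map_cat cat_take_drop.
Qed.

Lemma hleaf_novars g ts : novars (hleaf g ts) = all (@novars _ _ _) ts.
Proof. by rewrite /hleaf; case: eqP => _ //=; rewrite all_cat /= -all_cat cat_take_drop. Qed.

Lemma hleaf_wf (Sig : pred F) : Sig f -> Sig a -> ar a = 0 -> 0 < ar f -> ar f' = (ar f).-1 ->
  forall g ts, [pred g | Sig g || (g == f')] g -> size ts = ar g ->
  all (wf ar Sig) ts -> wf ar Sig (hleaf g ts).
Proof.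
move=> Hf Ha Har Hf0 Harf' g ts; rewrite /hleaf; case: eqP => [->|Hne] /= Hg Hsz Hall.
  rewrite Hf sz_ins Hsz Harf' prednK // eqxx /= all_cat /= Ha Har eqxx /=.
  by rewrite -all_cat cat_take_drop Hall.
move: Hg; case: eqP => // _; rewrite orbF => ->.
by rewrite Hsz eqxx Hall.
Qed.
End Leaf.

Section Pair.
Variables (a b c : F).
Definition hpair (g : F) (ts : seq term) : term :=
  if g == c then App a [:: App b ts] else App g ts.

Lemma pc_App g (ts : seq term) :
  (exists h (s : term), [/\ ts = [:: App h [:: s]], g = a, h = b &
     pair_comp a b c (App g ts) = App c [:: pair_comp a b c s]])
  \/ pair_comp a b c (App g ts) = App g (map (pair_comp a b c) ts).
Proof.
case: ts => [|t1 ts]; first by right.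
case: t1 => [h [|s [|s2 ss]]|y|Y s|]; case: ts => [|t2 ts]; try by right.
case E: ((g == a) && (h == b)).
  left; move/andP: E => [/eqP -> /eqP ->]; exists b, s; split => //=.
  by rewrite !eqxx.
by right; rewrite /= E.
Qed.

Lemma D_pair t : (~~ occurs c t -> D hpair (pair_comp a b c t) = t) /\
  (forall g s, t = App g [:: s] -> ~~ occurs c s -> D hpair (pair_comp a b c s) = s).
Proof.
elim/tm_ind': t => [g ts IH|x|X s IH|].
- split; last first.
    by move=> g' s [_ Hts]; move: IH; rewrite Hts /= => [[[H _] _]].
  move=> Hoc; move: (Hoc); rewrite [occurs _ _]/= negb_or => /andP [Hg Hts].
  case: (pc_App g ts) => [[h [s [Hts' Hga Hhb ->]]]|->] /=.
    move: IH Hts; rewrite Hts' /= => [[[_ H2] _]]; rewrite orbF negb_or => /andP [_].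
    rewrite orbF => Hs; rewrite /hpair eqxx (H2 h s) // Hga Hhb //.
  rewrite /hpair (negbTE Hg); congr App; rewrite -map_comp -[RHS]map_id; apply: map_allT.
  apply: (allT_all (q := predC (occurs c))); last by rewrite all_predC.
  exact: (allT_imp IH (fun t H => proj1 H)).
- by split => // _ [].
- by split => /= [/(proj1 IH) ->|] // _ _ [].
- by split => // _ [].
Qed.
Lemma hpair_plug g ts s : plug (hpair g ts) s = hpair g (map (fun c => plug c s) ts).
Proof. by rewrite /hpair; case: eqP. Qed.
Lemma hpair_subst sv sc g ts : subst sv sc (hpair g ts) = hpair g (map (subst sv sc) ts).
Proof. by rewrite /hpair; case: eqP. Qed.
Lemma hpair_holes g ts : holes (hpair g ts) = sumn (map (@holes _ _ _) ts).
Proof. by rewrite /hpair; case: eqP => _ //=; rewrite addn0. Qed.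
Lemma hpair_novars g ts : novars (hpair g ts) = all (@novars _ _ _) ts.
Proof. by rewrite /hpair; case: eqP => _ //=; rewrite andbT. Qed.
Lemma hpair_wf (Sig : pred F) : Sig a -> Sig b -> ar a = 1 -> ar b = 1 -> ar c = 1 ->
  forall g ts, [pred g | Sig g || (g == c)] g -> size ts = ar g ->
  all (wf ar Sig) ts -> wf ar Sig (hpair g ts).
Proof.
move=> Ha Hb Hara Harb Harc g ts; rewrite /hpair; case: eqP => [->|Hne] /= Hg Hsz Hall.
  by rewrite Ha Hara Hb Harb -Harc Hsz eqxx Hall.
move: Hg; case: eqP => // _; rewrite orbF => ->.
by rewrite Hsz eqxx Hall.
Qed.
End Pair.

Section Chain.
Variables (a : F) (al : nat -> F).
Hypothesis al_inj : forall l1 l2, 0 < l1 -> 0 < l2 -> al l1 = al l2 -> l1 = l2.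

Definition pickl (g : F) : option nat :=
  match excluded_middle_informative (exists l, 0 < l /\ al l = g) with
  | left H => Some (proj1_sig (constructive_indefinite_description _ H))
  | right _ => None
  end.

Lemma pickl_some g l : pickl g = Some l -> 0 < l /\ al l = g.
Proof.
rewrite /pickl; case: excluded_middle_informative => // H [<-].
exact: proj2_sig (constructive_indefinite_description _ H).
Qed.

Lemma pickl_none g : pickl g = None -> forall l, 0 < l -> al l <> g.
Proof.
rewrite /pickl; case: excluded_middle_informative => // H _ l Hl Hal.
by apply: H; exists l.
Qed.

Lemma pickl_al l : 0 < l -> pickl (al l) = Some l.
Proof.
move=> Hl; case E: (pickl (al l)) => [l'|].
  by case: (pickl_some E) => Hl' /al_inj ->.
by case: (pickl_none E Hl).
Qed.

Definition A (x : term) : term := App a [:: x].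

Definition hchain (g : F) (ts : seq term) : term :=
  match pickl g with
  | Some l => iter l.-1 A (App a ts)
  | None => App g ts
  end.

Lemma iterA (phi : term -> term) n x : (forall y, phi (A y) = A (phi y)) ->
  phi (iter n A x) = iter n A (phi x).
Proof. by move=> H; elim: n => // n IH; rewrite !iterS H IH. Qed.

Lemma hchain_plug g ts s : plug (hchain g ts) s = hchain g (map (fun c => plug c s) ts).
Proof. by rewrite /hchain; case: pickl => [l|] //; rewrite (iterA (phi := fun y => plug y s)). Qed.
Lemma hchain_subst sv sc g ts : subst sv sc (hchain g ts) = hchain g (map (subst sv sc) ts).
Proof. by rewrite /hchain; case: pickl => [l|] //; rewrite (iterA (phi := subst sv sc)). Qed.
Lemma iter_holes n x : holes (iter n A x) = holes x.
Proof. by elim: n => //= n ->; rewrite addn0. Qed.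
Lemma iter_novars n x : novars (iter n A x) = novars x.
Proof. by elim: n => //= n ->; rewrite andbT. Qed.
Lemma hchain_holes g ts : holes (hchain g ts) = sumn (map (@holes _ _ _) ts).
Proof. by rewrite /hchain; case: pickl => [l|] //; rewrite iter_holes. Qed.
Lemma hchain_novars g ts : novars (hchain g ts) = all (@novars _ _ _) ts.
Proof. by rewrite /hchain; case: pickl => [l|] //; rewrite iter_novars. Qed.
Lemma hchain_wf (Sig Sig' : pred F) : Sig a -> ar a = 1 ->
  (forall l, 0 < l -> ar (al l) = 1) ->
  (forall g, Sig' g <-> Sig g \/ exists2 l, 0 < l & g = al l) ->
  forall g ts, Sig' g -> size ts = ar g ->
  all (wf ar Sig) ts -> wf ar Sig (hchain g ts).
Proof.
move=> Ha Hara Haral HS g ts Hg Hsz Hall; rewrite /hchain.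
case E: (pickl g) => [l|].
  case: (pickl_some E) => Hl Hal.
  have -> : forall n x, wf ar Sig (iter n A x) = wf ar Sig x.
    by move=> n x; elim: n => //= n ->; rewrite Ha Hara eqxx andbT.
  by rewrite /= Ha Hsz -Hal Haral // Hara eqxx Hall.
case/HS: Hg => [Hg|[l Hl Hgl]]; last by case: (pickl_none E Hl).
by rewrite /= Hg Hsz eqxx Hall.
Qed.

Lemma D_wrap k x : D hchain (Defs.wrap al k x) = iter k A (D hchain x).
Proof.
rewrite /Defs.wrap; case: k => [|k] //=.
by rewrite /hchain pickl_al //= -iterSr.
Qed.

Lemma D_chain t : (forall l, 0 < l -> ~~ occurs (al l) t) ->
  forall k, D hchain (chain_comp a al k t) = iter k A t.
Proof.
elim/tm_ind': t => [g ts IH|x|X s IH|] /= Hoc k; try by rewrite D_wrap.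
- have Hp : pickl g = None.
    case E: (pickl g) => [l|] //; case: (pickl_some E) => Hl Hal.
    by move: (Hoc l Hl); rewrite Hal eqxx.
  have Hts : forall l, 0 < l -> all (predC (occurs (al l))) ts.
    by move=> l /Hoc; rewrite negb_or all_predC => /andP [].
  have IH' := allT_gen IH Hts.
  have Hm : map (D hchain) (map (chain_comp a al 0) ts) = ts.
    rewrite -map_comp -[RHS]map_id; apply: map_allT.
    exact: (allT_imp IH' (fun t H => H 0)).
  case: ts IH IH' Hts Hm Hoc => [|s [|s2 ss]] IH IH' Hts Hm Hoc.
  + by rewrite D_wrap /= /hchain Hp.
  + case: eqP => [Hga|_].
      by case: IH' => [H _]; rewrite H iterSr Hga.
    by rewrite D_wrap /= /hchain Hp; case: IH' => [H _]; rewrite H.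
  + by rewrite D_wrap /= /hchain Hp; move: Hm => /= ->.
- by rewrite D_wrap /= IH.
Qed.
End Chain.


Section Repl.
Variables (sv : V -> term) (sc : CV -> term).
Hypothesis Hsv : forall x, holes (sv x) = 0.

Lemma case1 X t s :
  subst sv (fun Y => if Y == X then plug (subst sv sc t) (sc X) else sc Y) s =
  subst sv sc (repl_CX_left X t s).
Proof.
elim/tm_ind': s => [f ts IH|x|Y s IH|] //=.
- by congr App; rewrite -map_comp; apply: map_allT.
- case: (Y =P X) => [EYX|_] /=; last by rewrite IH.
  subst Y.
  by rewrite subst_plug //= plug_assoc IH.
Qed.

Lemma case1' x t s :
  subst (fun y => if y == x then plug (subst sv sc t) (sv x) else sv y) sc s =
  subst sv sc (repl_x_left x t s).
Proof.
elim/tm_ind': s => [f ts IH|y|Y s IH|] //=.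
- by congr App; rewrite -map_comp; apply: map_allT.
- by case: (y =P x) => [Eyx|_] //=; subst y; rewrite subst_plug.
- by rewrite IH.
Qed.

Lemma case2 X t s :
  subst sv (fun Y => if Y == X then plug (sc X) (subst sv sc t) else sc Y) s =
  subst sv sc (repl_CX_right X t s).
Proof.
elim/tm_ind': s => [f ts IH|x|Y s IH|] //=.
- by congr App; rewrite -map_comp; apply: map_allT.
- case: (Y =P X) => [EYX|_] /=; last by rewrite IH.
  subst Y.
  by rewrite subst_plug //= plug_assoc IH.
Qed.

Lemma case3 x t s : novars t ->
  subst (fun y => if y == x then t else sv y) sc s = subst sv sc (repl_x x t s).
Proof.
move=> Ht; elim/tm_ind': s => [f ts IH|y|Y s IH|] //=.
- by congr App; rewrite -map_comp; apply: map_allT.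
- by case: (y =P x) => [Eyx|_] //=; subst y; rewrite subst_novars.
- by rewrite IH.
Qed.
End Repl.

End Gen.

Theorem lemma4p2 (F V CV : eqType) (ar : F -> nat) (Sig : pred F)
    (u v : tm F V CV) (Sig' : pred F) (u' v' : tm F V CV) :
  is_term ar Sig u -> is_term ar Sig v ->
  step ar Sig u v Sig' u' v' ->
  solvable ar Sig' u' v' -> solvable ar Sig u v.
Proof.
move=> Hu Hv []; clear Sig' u' v'.
- move=> X t Ht [sv [sc [Hsv Hsc Heq]]].
  have H0 : forall x, holes (sv x) = 0 by move=> x; case/andP: (Hsv x) => /andP [_ /eqP].
  exists sv, (fun Y => if Y == X then plug (subst sv sc t) (sc X) else sc Y); split => //.
    move=> Y; case: eqP => _ //.
    case/andP: (gctx_subst Hsv Hsc Ht) => /andP [Hw1 /eqP Hh1] Hn1.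
    case/andP: (Hsc X) => /andP [Hw2 /eqP Hh2] Hn2.
    by rewrite /is_gctx /is_ctxterm wf_plug // holes_plug Hh1 Hh2 novars_plug.
  by rewrite !case1.
- move=> x t Ht [sv [sc [Hsv Hsc Heq]]].
  have H0 : forall x, holes (sv x) = 0 by move=> y; case/andP: (Hsv y) => /andP [_ /eqP].
  exists (fun y => if y == x then plug (subst sv sc t) (sv x) else sv y), sc; split => //.
    move=> y; case: eqP => _ //.
    case/andP: (gctx_subst Hsv Hsc Ht) => /andP [Hw1 /eqP Hh1] Hn1.
    case/andP: (Hsv x) => /andP [Hw2 /eqP Hh2] Hn2.
    by rewrite /is_ground /is_term wf_plug // holes_plug Hh1 Hh2 novars_plug.
  by rewrite !case1'.
- move=> X t Ht [sv [sc [Hsv Hsc Heq]]].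
  have H0 : forall x, holes (sv x) = 0 by move=> x; case/andP: (Hsv x) => /andP [_ /eqP].
  exists sv, (fun Y => if Y == X then plug (sc X) (subst sv sc t) else sc Y); split => //.
    move=> Y; case: eqP => _ //.
    case/andP: (gctx_subst Hsv Hsc Ht) => /andP [Hw1 /eqP Hh1] Hn1.
    case/andP: (Hsc X) => /andP [Hw2 /eqP Hh2] Hn2.
    by rewrite /is_gctx /is_ctxterm wf_plug // holes_plug Hh1 Hh2 novars_plug.
  by rewrite !case2.
- move=> x t Ht [sv [sc [Hsv Hsc Heq]]].
  exists (fun y => if y == x then t else sv y), sc; split => //.
    by move=> y; case: eqP => _ //.
  by rewrite !case3 //; case/andP: Ht.
- move=> f i a f' Hf Ha /andP [Hi Hia] Har Harf' /andP [Hu' Hv'] Hsol.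
  have Hf0 : 0 < ar f by apply: leq_trans Hia.
  apply: (@D_solvable _ _ _ ar (hleaf f i a f') _ _ Sig [pred g | Sig g || (g == f')]
            _ _ _ (leaf_comp f i a f') u v _ _ Hsol).
  - exact: hleaf_plug.
  - exact: hleaf_subst.
  - exact: hleaf_holes.
  - exact: hleaf_novars.
  - exact: hleaf_wf.
  - exact: D_leaf.
  - exact: D_leaf.
- move=> a b c Ha Hb Hab Hara Harb Harc /andP [Hu' Hv'] Hsol.
  apply: (@D_solvable _ _ _ ar (hpair a b c) _ _ Sig [pred g | Sig g || (g == c)]
            _ _ _ (pair_comp a b c) u v _ _ Hsol).
  - exact: hpair_plug.
  - exact: hpair_subst.
  - exact: hpair_holes.
  - exact: hpair_novars.
  - exact: hpair_wf.
  - exact: (proj1 (D_pair a b c u)).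
  - exact: (proj1 (D_pair a b c v)).
- move=> a al Sig' Ha Hara Haral Hinj Hfr HS Hsol.
  apply: (@D_solvable _ _ _ ar (hchain a al) _ _ Sig Sig'
            _ _ _ (chain_comp a al 0) u v _ _ Hsol).
  - exact: hchain_plug.
  - exact: hchain_subst.
  - exact: hchain_holes.
  - exact: hchain_novars.
  - exact: hchain_wf.
  - by apply: (@D_chain _ _ _ a al Hinj u _ 0) => l /Hfr /andP [].
  - by apply: (@D_chain _ _ _ a al Hinj v _ 0) => l /Hfr /andP [].
Qed.
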